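(* There is a constant $C > 0$ such that for any $n \ge 2$ and any $p \in \mathcal{P}_n$, $$\max_{|\theta| \le n^{-2/5}} |p(e^{i \theta})| \ge \exp(-Cn^{1/5}\log^5 n).$$
   Context: $\mathcal{P}_n$ is the set of all polynomials $p(z) = 1-\sigma z^d+\sum_{j = n^{1/5}}^n c_j z^j \in \mathbb{C}[z]$ with $1 \le d < n^{1/5}$ an integer, $\sigma \in \{0,1\}$, and complex coefficients satisfying $|c_j| \le 1$ for each $j$ (the sum runs over integers $j$ with $n^{1/5} \le j \le n$; floor functions are omitted). $\log$ is the natural logarithm. *)

(* Defs.v *)
From Stdlib Require Import Reals.
From Coquelicot Require Import Coquelicot.
Open Scope R_scope.

Definition n15 (n : nat) : R := Rpower (INR n) (1/5).

Definition pval (n d : nat) (sigma : bool) (c : nat -> C) (z : C) : C :=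
  Cminus (RtoC 1) (Cmult (if sigma then RtoC 1 else RtoC 0) (Cpow z d))
  + sum_n (fun j => if Rle_dec (n15 n) (INR j) then Cmult (c j) (Cpow z j)
                    else RtoC 0) n.

Definition cexpi (theta : R) : C := (cos theta, sin theta).

(* Main.v *)
Require Import Defs.
From Stdlib Require Import Reals Lra Lia Psatz ZArith.
From Coquelicot Require Import Coquelicot.
Open Scope R_scope.

Fixpoint csum (f : nat -> C) (D : nat) : C :=
  match D with O => f O | S D' => (csum f D' + f (S D'))%C end.
Fixpoint cprod (f : nat -> C) (N : nat) : C :=
  match N with O => 1%C | S N' => (cprod f N' * f N')%C end.

Lemma csum_ext_le f g D : (forall j, (j <= D)%nat -> f j = g j) -> csum f D = csum g D.
Proof. induction D; intros H; simpl. apply H; lia. rewrite IHD, H; auto. Qed.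

Lemma csum_plus f g D : csum (fun j => f j + g j)%C D = (csum f D + csum g D)%C.
Proof. induction D; simpl; auto. rewrite IHD. ring. Qed.

Lemma csum_scal c f D : (c * csum f D)%C = csum (fun j => c * f j)%C D.
Proof. induction D; simpl; auto. rewrite <- IHD. ring. Qed.

Lemma csum_S0 g D : csum g (S D) = (g O + csum (fun j => g (S j)) D)%C.
Proof. induction D. simpl. auto. change (csum g (S (S D))) with (csum g (S D) + g (S (S D)))%C.
 rewrite IHD. simpl. ring. Qed.

Lemma csum_zero_tail (f : nat -> C) D : (forall j, (1 <= j <= D)%nat -> f j = RtoC 0) -> csum f D = f O.
Proof. induction D; intros H; simpl; auto. rewrite (H (S D)) by lia. rewrite IHD. ring. intros; apply H; lia. Qed.

Lemma csum_swap (F : nat -> nat -> C) D M :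
  csum (fun l => csum (fun j => F l j) D) M = csum (fun j => csum (fun l => F l j) M) D.
Proof. induction M; simpl; auto. rewrite IHM, <- csum_plus. reflexivity. Qed.

Definition IsPoly (f : C -> C) (D : nat) :=
  exists b : nat -> C, forall z, f z = csum (fun j => b j * z ^ j)%C D.

Lemma IsPoly_ext f g D : (forall z, f z = g z) -> IsPoly f D -> IsPoly g D.
Proof. intros H [b Hb]. exists b. intros z. rewrite <- H. auto. Qed.

Lemma IsPoly_const c : IsPoly (fun _ => c) 0.
Proof. exists (fun _ => c). intros z. simpl. ring. Qed.

Lemma IsPoly_weak1 f D : IsPoly f D -> IsPoly f (S D).
Proof. intros [b Hb]. exists (fun j => if Nat.eqb j (S D) then RtoC 0 else b j).
 intros z. rewrite Hb. cbn [csum]. rewrite Nat.eqb_refl. rewrite Cmult_0_l, Cplus_0_r.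
 apply csum_ext_le. intros j Hj. destruct (Nat.eqb_spec j (S D)). lia. auto. Qed.

Lemma IsPoly_weak f D E : IsPoly f D -> (D <= E)%nat -> IsPoly f E.
Proof. intros H HE. induction HE; auto. apply IsPoly_weak1; auto. Qed.

Lemma IsPoly_add f g D : IsPoly f D -> IsPoly g D -> IsPoly (fun z => f z + g z)%C D.
Proof. intros [b Hb] [b' Hb']. exists (fun j => b j + b' j)%C. intros z.
 rewrite Hb, Hb', <- csum_plus. apply csum_ext_le. intros; ring. Qed.

Lemma IsPoly_scal c f D : IsPoly f D -> IsPoly (fun z => c * f z)%C D.
Proof. intros [b Hb]. exists (fun j => c * b j)%C. intros z.
 rewrite Hb, csum_scal. apply csum_ext_le. intros; ring. Qed.

Lemma IsPoly_mulz f D : IsPoly f D -> IsPoly (fun z => z * f z)%C (S D).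
Proof. intros [b Hb]. exists (fun j => match j with O => RtoC 0 | S jj => b jj end).
 intros z. rewrite csum_S0, Hb, csum_scal. rewrite Cmult_0_l, Cplus_0_l.
 apply csum_ext_le. intros j _. rewrite Cpow_S. ring. Qed.

Lemma IsPoly_zpow_mul g E j : IsPoly g E -> IsPoly (fun z => z ^ j * g z)%C (j + E).
Proof. intros Hg. induction j; simpl.
 - eapply IsPoly_ext; [|exact Hg]. intros; simpl; ring.
 - eapply IsPoly_ext; [|apply (IsPoly_mulz _ _ IHj)]. intros; simpl; ring. Qed.

Lemma IsPoly_mul f g D E : IsPoly f D -> IsPoly g E -> IsPoly (fun z => f z * g z)%C (D + E).
Proof. intros [b Hb] Hg.
 assert (K: forall D', IsPoly (fun z => csum (fun j => b j * (z ^ j * g z)) D')%C (D' + E)).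
 { induction D'; simpl.
   - apply IsPoly_scal. apply (IsPoly_zpow_mul g E 0). auto.
   - apply IsPoly_add. apply IsPoly_weak1. auto. apply IsPoly_scal. apply (IsPoly_zpow_mul g E (S D')). auto. }
 eapply IsPoly_ext; [|apply (K D)]. intros z. rewrite Hb. rewrite Cmult_comm, csum_scal.
 apply csum_ext_le. intros; ring. Qed.

Lemma IsPoly_rot f D w : IsPoly f D -> IsPoly (fun z => f (w * z))%C D.
Proof. intros [b Hb]. exists (fun j => b j * w ^ j)%C. intros z. rewrite Hb.
 apply csum_ext_le. intros j _. rewrite Cpow_mult_l. ring. Qed.

Lemma IsPoly_pow f D k : IsPoly f D -> IsPoly (fun z => f z ^ k)%C (k * D).
Proof. intros H. induction k; simpl.
 - apply IsPoly_const.
 - eapply IsPoly_ext; [|apply (IsPoly_mul _ _ _ _ H IHk)]. intros; simpl; auto. Qed.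

Lemma IsPoly_csum (F : nat -> C -> C) D D' : (forall j, (j <= D')%nat -> IsPoly (F j) D) ->
  IsPoly (fun z => csum (fun j => F j z) D') D.
Proof. induction D'; intros H; simpl. apply H; lia. apply IsPoly_add. apply IHD'. intros; apply H; lia. apply H; lia. Qed.

Lemma IsPoly_prod f D (w : nat -> C) N : IsPoly f D -> IsPoly (fun z => cprod (fun k => f (w k * z)%C) N) (N * D).
Proof. intros H. induction N; simpl.
 - apply IsPoly_const.
 - replace (D + N * D)%nat with (N * D + D)%nat by lia.
   eapply IsPoly_ext; [|apply (IsPoly_mul _ _ _ _ IHN (IsPoly_rot _ _ (w N) H))].
   intros; simpl; auto. Qed.

Lemma cexpi_add a b : (cexpi a * cexpi b)%C = cexpi (a + b).
Proof. unfold cexpi, Cmult; simpl. rewrite cos_plus, sin_plus. f_equal; ring. Qed.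

Lemma cexpi_0 : cexpi 0 = RtoC 1.
Proof. unfold cexpi, RtoC. rewrite cos_0, sin_0. auto. Qed.

Lemma cexpi_pow t j : (cexpi t ^ j)%C = cexpi (INR j * t).
Proof. induction j. simpl. rewrite Rmult_0_l, cexpi_0. auto.
 rewrite Cpow_S, IHj, cexpi_add. f_equal. rewrite S_INR. ring. Qed.

Lemma cexpi_period t k : cexpi (t + 2 * INR k * PI) = cexpi t.
Proof. unfold cexpi. rewrite cos_period, sin_period. auto. Qed.

Lemma Cmod_cexpi t : Cmod (cexpi t) = 1.
Proof. unfold Cmod, cexpi. simpl. replace (cos t * (cos t * 1) + sin t * (sin t * 1)) with 1. apply sqrt_1. pose proof (sin2_cos2 t). unfold Rsqr in H. lra. Qed.

Lemma cexpi_neq1 t : 0 < t < 2 * PI -> cexpi t <> RtoC 1.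
Proof. intros Ht H. apply (f_equal fst) in H. unfold cexpi, RtoC in H; simpl in H.
 assert (0 < sin (t/2)) by (apply sin_gt_0; lra).
 replace t with (2 * (t/2)) in H by field. rewrite cos_2a_sin in H. nra. Qed.

Lemma geom_zero q M : (q ^ (S M))%C = RtoC 1 -> q <> RtoC 1 -> csum (fun l => q ^ l)%C M = RtoC 0.
Proof. intros H1 H2.
 assert (G: forall M, ((q - 1) * csum (fun l => q ^ l)%C M = q ^ (S M) - 1)%C).
 { induction M0; simpl. ring. rewrite Cmult_plus_distr_l, IHM0. simpl. ring. }
 assert (Hq: (q - 1)%C <> RtoC 0). { intros E. apply H2. rewrite <- (Cplus_0_l 1). rewrite <- E. ring. }
 rewrite <- (Cmult_1_l (csum _ M)). rewrite <- (Cinv_l _ Hq), <- Cmult_assoc, G, H1. ring. Qed.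

Lemma csum_const1 M : csum (fun _ => RtoC 1) M = RtoC (INR (S M)).
Proof. induction M. simpl. auto. change (csum (fun _ => RtoC 1) (S M)) with (csum (fun _ => RtoC 1) M + 1)%C.
 rewrite IHM, (S_INR (S M)), RtoC_plus. auto. Qed.

Lemma mean_value G D M' : IsPoly G D -> (D <= M')%nat ->
  csum (fun l => G (cexpi (2 * PI / INR (S M')) ^ l)%C) M' = (RtoC (INR (S M')) * G (RtoC 0))%C.
Proof. intros [b Hb] HD. set (eta := cexpi (2 * PI / INR (S M'))).
 rewrite (csum_ext_le _ (fun l => csum (fun j => b j * (eta ^ j) ^ l) D)%C).
 2:{ intros l _. rewrite Hb. apply csum_ext_le. intros j _. rewrite <- !Cpow_mult_r, Nat.mul_comm. auto. }
 rewrite csum_swap. rewrite (csum_ext_le _ (fun j => b j * csum (fun l => (eta ^ j) ^ l) M')%C).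
 2:{ intros. rewrite csum_scal. auto. }
 rewrite csum_zero_tail.
 2:{ intros j Hj. rewrite geom_zero. ring.
     - unfold eta. rewrite !cexpi_pow. replace (INR (S M') * (INR j * (2 * PI / INR (S M')))) with (0 + 2 * INR j * PI).
       rewrite cexpi_period, cexpi_0. auto. field. apply not_0_INR. lia.
     - unfold eta. rewrite cexpi_pow. apply cexpi_neq1. assert (0 < INR j) by (apply lt_0_INR; lia).
       assert (INR j < INR (S M')) by (apply lt_INR; lia). pose proof PI_RGT_0.
       split. apply Rmult_lt_0_compat; auto. apply Rdiv_lt_0_compat; lra.
       replace (INR j * (2 * PI / INR (S M'))) with (2 * PI * (INR j / INR (S M'))) by (field; lra).
       rewrite <- (Rmult_1_r (2*PI)) at 2. apply Rmult_lt_compat_l. lra.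
       apply (Rmult_lt_reg_r (INR (S M'))). lra. unfold Rdiv. rewrite Rmult_assoc, Rinv_l by lra. lra. }
 rewrite (Hb (RtoC 0)), (csum_zero_tail (fun j => b j * RtoC 0 ^ j)%C D).
 2:{ intros j Hj. destruct j. lia. rewrite Cpow_S. ring. }
 rewrite (csum_ext_le _ (fun _ => RtoC 1)).
 2:{ intros. simpl. apply Cpow_1_l. }
 rewrite csum_const1. simpl. ring. Qed.

Lemma csum_Cmod_lt (f : nat -> C) M y : (forall l, (l <= M)%nat -> Cmod (f l) < y) ->
  Cmod (csum f M) < INR (S M) * y.
Proof. induction M; intros H.
 - cbn [csum]. change (INR 1) with 1. rewrite Rmult_1_l. apply H; lia.
 - cbn [csum]. eapply Rle_lt_trans. apply Cmod_triangle. rewrite (S_INR (S M)).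
 assert (Cmod (csum f M) < INR (S M) * y) by (apply IHM; intros; apply H; lia).
 assert (Cmod (f (S M)) < y) by (apply H; lia). lra. Qed.

Lemma mean_value_max G D M' : IsPoly G D -> (D <= M')%nat ->
  exists l, (l <= M')%nat /\ Cmod (G (RtoC 0)) <= Cmod (G (cexpi (2 * PI / INR (S M')) ^ l)%C).
Proof. intros HG HD. pose proof (mean_value G D M' HG HD) as E.
 destruct (Classical_Prop.classic (exists l, (l <= M')%nat /\ Cmod (G (RtoC 0)) <= Cmod (G (cexpi (2 * PI / INR (S M')) ^ l)%C))) as [H|H]; auto.
 exfalso. assert (Hlt: Cmod (csum (fun l => G (cexpi (2 * PI / INR (S M')) ^ l)%C) M') < INR (S M') * Cmod (G (RtoC 0))).
 { apply csum_Cmod_lt. intros l Hl. apply Rnot_le_lt. intros Hc. apply H. eauto. }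
 rewrite E, Cmod_mult, Cmod_R, Rabs_pos_eq in Hlt. lra. apply pos_INR. Qed.

Lemma cprod_add f N M : cprod f (N + M) = (cprod f N * cprod (fun k => f (N + k)%nat) M)%C.
Proof. induction M; simpl. rewrite Nat.add_0_r. ring. rewrite Nat.add_succ_r. simpl. rewrite IHM. ring. Qed.

Lemma cprod_mul f g N : cprod (fun k => f k * g k)%C N = (cprod f N * cprod g N)%C.
Proof. induction N; simpl. ring. rewrite IHN. ring. Qed.

Lemma cprod_ext f g N : (forall k, (k < N)%nat -> f k = g k) -> cprod f N = cprod g N.
Proof. induction N; intros H; simpl; auto. rewrite IHN, H. auto. lia. intros; apply H; lia. Qed.

Lemma root_prod r : forall x : C,
  cprod (fun k => 1 + x * cexpi (2 * PI / INR (2 ^ r)) ^ k)%C (2 ^ r) = (1 - (- x) ^ (2 ^ r))%C.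
Proof. induction r; intros x.
 - simpl. ring.
 - replace (2 ^ S r)%nat with (2 ^ r + 2 ^ r)%nat by (simpl; lia).
   rewrite cprod_add, <- cprod_mul.
   set (N := (2 ^ r)%nat).
   assert (HN: 0 < INR N) by (apply lt_0_INR; unfold N; pose proof (Nat.pow_nonzero 2 r); lia).
   rewrite (cprod_ext _ (fun k => 1 + (- (x * x)) * cexpi (2 * PI / INR N) ^ k)%C).
   + rewrite IHr, Cpow_add_r, <- Cpow_mult_l. f_equal. f_equal. ring.
   + intros k Hk. rewrite !cexpi_pow.
     set (t := INR k * (2 * PI / INR (N + N))).
     replace (INR (N + k) * (2 * PI / INR (N + N))) with (t + PI).
     2:{ unfold t. rewrite plus_INR, plus_INR. field. lra. }
     replace (INR k * (2 * PI / INR N)) with (t + t).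
     2:{ unfold t. rewrite plus_INR. field. lra. }
     rewrite <- (cexpi_add t t).
     replace (cexpi (t + PI)) with (- cexpi t)%C.
     ring.
     unfold cexpi, Copp. simpl. rewrite neg_cos, neg_sin. auto.
Qed.

Lemma sum_n_csum (f : nat -> C) n : sum_n f n = csum f n.
Proof. induction n. rewrite sum_O. auto. rewrite sum_Sn, IHn. auto. Qed.

Definition sg (sigma : bool) : C := if sigma then RtoC 1 else RtoC 0.

Definition tm n (c : nat -> C) j (v : C) : C :=
  if Rle_dec (n15 n) (INR j) then (c j * v)%C else RtoC 0.

Lemma pval_eq n d sigma c z :
  pval n d sigma c z = (1 - sg sigma * z ^ d + csum (fun j => tm n c j (z ^ j)) n)%C.
Proof. unfold pval. rewrite sum_n_csum. auto. Qed.

Definition Pm n d sigma c (a : R) (z : C) : C :=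
  ((1 + a * z) ^ n - sg sigma * ((z + a) ^ d * (1 + a * z) ^ (n - d))
   + csum (fun j => tm n c j ((z + a) ^ j * (1 + a * z) ^ (n - j))) n)%C.

Lemma pow_trade (y v w : C) j n : (j <= n)%nat -> (w * y = v)%C ->
  (y ^ n * w ^ j = v ^ j * y ^ (n - j))%C.
Proof. intros Hj Hw. replace n with (j + (n - j))%nat at 1 by lia. rewrite Cpow_add_r, <- Hw, Cpow_mult_l. ring. Qed.

Lemma Pm_eq n d sigma c (a : R) z w : (d <= n)%nat -> (w * (1 + a * z) = z + a)%C ->
  Pm n d sigma c a z = ((1 + a * z) ^ n * pval n d sigma c w)%C.
Proof. intros Hd Hw. rewrite pval_eq. unfold Pm.
 rewrite <- (pow_trade _ _ _ d n Hd Hw).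
 rewrite !Cmult_plus_distr_l, csum_scal.
 rewrite (csum_ext_le (fun j => tm n c j ((z + a) ^ j * (1 + a * z) ^ (n - j)))%C
     (fun j => (1 + a * z) ^ n * tm n c j (w ^ j))%C).
 ring. intros j Hj. unfold tm. destruct Rle_dec. rewrite <- (pow_trade _ _ _ j n Hj Hw). ring. ring. Qed.

Lemma IsPoly_lin (u v : C) : IsPoly (fun z => u + v * z)%C 1.
Proof. exists (fun j => match j with O => u | _ => v end). intros z. simpl. ring. Qed.

Lemma IsPoly_Pm n d sigma c a : (d <= n)%nat -> IsPoly (Pm n d sigma c a) n.
Proof. intros Hd. unfold Pm.
 assert (H1 : forall k, IsPoly (fun z => (1 + a * z) ^ k)%C k).
 { intros k. pose proof (IsPoly_pow _ _ k (IsPoly_lin 1 a)) as H. rewrite Nat.mul_1_r in H. exact H. }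
 assert (H2 : forall k, IsPoly (fun z => (z + a) ^ k)%C k).
 { intros k. assert (L: IsPoly (fun z => z + a)%C 1) by (eapply IsPoly_ext; [|apply (IsPoly_lin a 1)]; intros; simpl; ring).
   pose proof (IsPoly_pow _ _ k L) as H. rewrite Nat.mul_1_r in H. exact H. }
 assert (H3 : forall j, (j <= n)%nat -> IsPoly (fun z => (z + a) ^ j * (1 + a * z) ^ (n - j))%C n).
 { intros j Hj. pose proof (IsPoly_mul _ _ _ _ (H2 j) (H1 (n - j)%nat)) as H.
   replace (j + (n - j))%nat with n in H by lia. exact H. }
 apply IsPoly_add. apply IsPoly_add. auto.
 eapply IsPoly_ext; [|apply (IsPoly_scal (- sg sigma) _ _ (H3 d Hd))]. intros; simpl; ring.
 apply IsPoly_csum. intros j Hj. unfold tm. destruct Rle_dec.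
 apply IsPoly_scal; auto. eapply IsPoly_weak. apply IsPoly_const. lia. Qed.

Lemma csum_Cmod_le (f : nat -> C) M y : (forall l, (l <= M)%nat -> Cmod (f l) <= y) ->
  Cmod (csum f M) <= INR (S M) * y.
Proof. induction M; intros H.
 - cbn [csum]. change (INR 1) with 1. rewrite Rmult_1_l. apply H; lia.
 - cbn [csum]. eapply Rle_trans. apply Cmod_triangle. rewrite (S_INR (S M)).
 assert (Cmod (csum f M) <= INR (S M) * y) by (apply IHM; intros; apply H; lia).
 assert (Cmod (f (S M)) <= y) by (apply H; lia). lra. Qed.

Lemma Cmod_sg sigma : Cmod (sg sigma) <= 1.
Proof. destruct sigma; simpl; rewrite Cmod_R; rewrite Rabs_pos_eq; lra. Qed.

Lemma pval_upper n d sigma c w :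
  (forall j : nat, n15 n <= INR j -> (j <= n)%nat -> Cmod (c j) <= 1) -> Cmod w = 1 ->
  Cmod (pval n d sigma c w) <= INR n + 3.
Proof. intros Hc Hw. rewrite pval_eq.
 assert (HS: Cmod (csum (fun j => tm n c j (w ^ j)) n) <= INR (S n) * 1).
 { apply csum_Cmod_le. intros j Hj. unfold tm. destruct Rle_dec.
   rewrite Cmod_mult, Cmod_pow, Hw, pow1, Rmult_1_r. auto.
   rewrite Cmod_0. lra. }
 assert (Hs: Cmod (sg sigma * w ^ d) <= 1).
 { rewrite Cmod_mult, Cmod_pow, Hw, pow1, Rmult_1_r. apply Cmod_sg. }
 rewrite S_INR in HS.
 eapply Rle_trans. apply Cmod_triangle. unfold Cminus. 
 eapply Rle_trans. apply Rplus_le_compat_r. apply Cmod_triangle. rewrite Cmod_opp, Cmod_1. lra. Qed.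

Lemma pval_lower n d sigma c (a e : R) : 0 <= a < 1 -> 0 <= e -> (1 <= d)%nat ->
  (forall j : nat, n15 n <= INR j -> a ^ j <= e) ->
  (forall j : nat, n15 n <= INR j -> (j <= n)%nat -> Cmod (c j) <= 1) ->
  (1 - a) - (INR n + 1) * e <= Cmod (pval n d sigma c (RtoC a)).
Proof. intros Ha He Hd Hae Hc. rewrite pval_eq.
 set (Sm := csum (fun j => tm n c j (RtoC a ^ j)) n).
 assert (HS: Cmod Sm <= INR (S n) * e).
 { apply csum_Cmod_le. intros j Hj. unfold tm. destruct Rle_dec.
   rewrite Cmod_mult, <- RtoC_pow, Cmod_R, Rabs_pos_eq. 
   specialize (Hc j r Hj). specialize (Hae j r). pose proof (pow_le a j (proj1 Ha)).
   apply Rle_trans with (1 * a ^ j). apply Rmult_le_compat_r; lra. lra.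
   apply pow_le; lra.
   rewrite Cmod_0. lra. }
 rewrite S_INR in HS.
 assert (HA: 1 - a <= Cmod (1 - sg sigma * RtoC a ^ d)%C).
 { assert (a ^ d <= a). { destruct d. lia. change (a ^ S d) with (a * a ^ d).
     assert (a ^ d <= 1 ^ d) by (apply pow_incr; lra). rewrite pow1 in H.
     assert (0 <= a ^ d) by (apply pow_le; lra). nra. }
   assert (0 <= a ^ d) by (apply pow_le; lra).
   destruct sigma; simpl sg.
   - replace (1 - 1 * RtoC a ^ d)%C with (RtoC (1 - a ^ d)).
     rewrite Cmod_R, Rabs_pos_eq; lra. rewrite RtoC_minus, RtoC_pow. ring.
   - replace (1 - 0 * RtoC a ^ d)%C with (RtoC 1) by ring. rewrite Cmod_1. lra. }
 assert (E: (1 - sg sigma * RtoC a ^ d)%C = (1 - sg sigma * RtoC a ^ d + Sm + - Sm)%C) by ring.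
 rewrite E in HA. pose proof (Cmod_triangle (1 - sg sigma * RtoC a ^ d + Sm)%C (- Sm)%C).
 rewrite Cmod_opp in H. lra. Qed.

Fixpoint rprod (f : nat -> R) (N : nat) : R :=
  match N with O => 1 | S N' => rprod f N' * f N' end.

Lemma Cmod_cprod f N : Cmod (cprod f N) = rprod (fun k => Cmod (f k)) N.
Proof. induction N; simpl. apply Cmod_1. rewrite Cmod_mult, IHN. auto. Qed.

Lemma rprod_S0 H N : rprod H (S N) = H O * rprod (fun k => H (S k)) N.
Proof. induction N. simpl. ring. change (rprod H (S (S N))) with (rprod H (S N) * H (S N)).
 rewrite IHN. simpl. ring. Qed.

Lemma rprod_ext f g N : (forall k, (k < N)%nat -> f k = g k) -> rprod f N = rprod g N.
Proof. induction N; intros H; simpl; auto. rewrite IHN, H. auto. lia. intros; apply H; lia. Qed.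

Lemma rprod_shift1 H N : H N = H O -> rprod (fun k => H (S k)) N = rprod H N.
Proof. intros E. destruct N. auto. rewrite (rprod_S0 H N).
 change (rprod (fun k => H (S k)) (S N)) with (rprod (fun k => H (S k)) N * H (S N)).
 rewrite E. ring. Qed.

Lemma rprod_shift F N q : (forall j, F (j + N)%nat = F j) -> rprod (fun k => F (k + q)%nat) N = rprod F N.
Proof. intros HF. induction q.
 - apply rprod_ext. intros; f_equal; lia.
 - rewrite <- IHq. rewrite <- (rprod_shift1 (fun k => F (k + q)%nat)).
   apply rprod_ext. intros; f_equal; lia. rewrite <- (HF (0 + q)%nat). f_equal. lia. Qed.

Lemma rprod_nonneg F N : (forall j, 0 <= F j) -> 0 <= rprod F N.
Proof. intros H. induction N; simpl. lra. apply Rmult_le_pos; auto. Qed.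

Lemma rprod_bound F N T B e : (forall j, 0 <= F j <= B) -> (forall j, (j < T)%nat -> F j <= e) ->
  (T <= N)%nat -> rprod F N <= e ^ T * B ^ (N - T).
Proof. intros HB He HT.
 assert (A1 : forall k, (k <= T)%nat -> rprod F k <= e ^ k).
 { induction k; intros Hk; simpl. lra. rewrite Rmult_comm. apply Rmult_le_compat.
   apply HB. apply rprod_nonneg. intros; apply HB. apply He; lia. apply IHk; lia. }
 replace N with (T + (N - T))%nat at 1 by lia. generalize (N - T)%nat as m. induction m.
 - rewrite Nat.add_0_r. simpl. rewrite Rmult_1_r. auto.
 - rewrite Nat.add_succ_r. change (rprod F (S (T + m))) with (rprod F (T + m) * F (T + m)%nat).
   change (B ^ S m) with (B * B ^ m).
   replace (e ^ T * (B * B ^ m)) with ((e ^ T * B ^ m) * B) by ring.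
   apply Rmult_le_compat; auto. apply rprod_nonneg; intros; apply HB. apply HB. apply HB. Qed.

Lemma cprod_const (x : C) N : cprod (fun _ => x) N = (x ^ N)%C.
Proof. induction N; simpl; auto. rewrite IHN. ring. Qed.

Lemma cprod_pow f N n : cprod (fun k => f k ^ n)%C N = (cprod f N ^ n)%C.
Proof. induction N; simpl. rewrite Cpow_1_l. auto. rewrite IHN, Cpow_mult_l. auto. Qed.

Definition Wm (a b : R) : C :=
  ((cos b * (1 + a ^ 2) + 2 * a) / (1 + 2 * a * cos b + a ^ 2),
   sin b * (1 - a ^ 2) / (1 + 2 * a * cos b + a ^ 2)).

Lemma D_pos a x : 0 <= a < 1 -> -1 <= x <= 1 -> 0 < 1 + 2 * a * x + a ^ 2.
Proof. intros. nra. Qed.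

Lemma Wm_eq a b : 0 <= a < 1 -> (Wm a b * (1 + RtoC a * cexpi b) = cexpi b + RtoC a)%C.
Proof. intros Ha. pose proof (sin2_cos2 b) as E. unfold Rsqr in E.
 pose proof (COS_bound b).
 assert (HD: 0 < 1 + 2 * a * cos b + a ^ 2) by (apply D_pos; lra).
 unfold Wm, cexpi, Cmult, Cplus, RtoC. simpl. f_equal.
 - field_simplify_eq. 2: lra. replace (sin b ^ 2) with (1 - cos b ^ 2) by (simpl; lra). ring.
 - field_simplify_eq. 2: lra. try (replace (sin b ^ 2) with (1 - cos b ^ 2) by (simpl; lra)). ring.
Qed.

Lemma Wm_norm a b : 0 <= a < 1 -> fst (Wm a b) ^ 2 + snd (Wm a b) ^ 2 = 1.
Proof. intros Ha. pose proof (sin2_cos2 b) as E. unfold Rsqr in E.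
 pose proof (COS_bound b).
 assert (HD: 0 < 1 + 2 * a * cos b + a ^ 2) by (apply D_pos; lra).
 unfold Wm. simpl. field_simplify_eq. 2: lra.
 replace (sin b ^ 2) with (1 - cos b ^ 2) by (simpl; lra). ring. Qed.

Lemma Cmod_Wm a b : 0 <= a < 1 -> Cmod (Wm a b) = 1.
Proof. intros Ha. unfold Cmod. rewrite Wm_norm; auto. apply sqrt_1. Qed.

Lemma Wm_period a b : Wm a (b + 2 * PI) = Wm a b.
Proof. unfold Wm. replace (b + 2 * PI) with (b + 2 * INR 1 * PI) by (simpl; ring).
 rewrite cos_period, sin_period. auto. Qed.


Lemma cos_lb_ub x : -1 <= x <= 1 -> 1 - x^2/2 <= cos x <= 1 - x^2/2 + x^4/24.
Proof. intros Hx. pose proof PI_RGT_0. pose proof PI2_1.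
 destruct (cos_bound x 0) as [H1 H2]; try lra.
 replace (cos_approx x (2 * 0 + 1)) with (1 - x^2/2) in H1 by (unfold cos_approx, cos_term; simpl; field).
 replace (cos_approx x (2 * (0 + 1))) with (1 - x^2/2 + x^4/24) in H2 by (unfold cos_approx, cos_term; simpl; field).
 lra. Qed.

Lemma Wm_arc (s dl b : R) : 0 < dl -> dl <= s -> s <= 1 -> 0 <= b <= dl / (2 * s) ->
  exists th, Rabs th <= dl /\ Wm (1 - s) b = cexpi th.
Proof. intros Hdl Hds Hs1 Hb. set (a := 1 - s).
 assert (Ha : 0 <= a < 1) by (unfold a; lra).
 assert (Hb2 : b <= 1/2). { apply Rle_trans with (dl / (2 * s)). lra. 
   apply Rmult_le_reg_r with (2 * s). lra. field_simplify; lra. }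
 assert (Hbs : b * (2 * s) <= dl). { apply Rle_trans with (dl / (2 * s) * (2 * s)).
   apply Rmult_le_compat_r; lra. right; field; lra. }
 destruct (cos_lb_ub b) as [Cb1 _]. lra.
 destruct (cos_lb_ub dl) as [Cd1 Cd2]. lra.
 pose proof PI_RGT_0. pose proof PI2_1.
 assert (Sb : 0 <= sin b) by (apply sin_ge_0; lra).
 pose proof (COS_bound b).
 assert (HD: 0 < 1 + 2 * a * cos b + a ^ 2) by (apply D_pos; lra).
 set (X := fst (Wm a b)). set (Y := snd (Wm a b)).
 assert (HXY : X ^ 2 + Y ^ 2 = 1) by (apply Wm_norm; auto).
 assert (HY : 0 <= Y). { unfold Y, Wm; cbn [snd]. apply Rmult_le_pos. apply Rmult_le_pos. lra. nra.
   left; apply Rinv_0_lt_compat; lra. }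
 assert (HX : cos dl <= X).
 { unfold X, Wm; cbn [fst]. apply Rmult_le_reg_r with (1 + 2 * a * cos b + a ^ 2). lra.
   match goal with |- _ <= ?N / ?D * _ => replace (N / D * D) with N by (field; lra) end.
   set (e := 1 - cos b). set (cc := cos dl).
   assert (He1 : e * (2 * s) * (2 * s) <= dl * dl / 2).
   { unfold e. apply Rle_trans with (b * b / 2 * (2 * s) * (2 * s)).
     apply Rmult_le_compat_r. lra. apply Rmult_le_compat_r. lra. simpl in Cb1. lra.
     assert (0 <= b * (2 * s)) by nra.
     replace (b * b / 2 * (2 * s) * (2 * s)) with ((b * (2 * s)) * (b * (2 * s)) / 2) by field.
     assert ((b * (2 * s)) * (b * (2 * s)) <= dl * dl) by nra. lra. }
   assert (He0 : 0 <= e) by (unfold e; lra).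
   assert (Hc1 : dl * dl / 4 <= 1 - cc). { unfold cc. simpl in Cd2. 
     assert (0 <= dl * dl) by nra. assert (dl * dl <= 1) by nra. assert (dl * dl * (dl * dl) <= dl * dl) by nra. lra. }
   assert (Hc2 : 1 - cc <= dl * dl / 2) by (unfold cc; simpl in Cd1; lra).
   assert (Key : e * ((1 - a) ^ 2 + 2 * a * (1 - cc)) <= (1 - cc) * (1 + a) ^ 2).
   { apply Rle_trans with (e * (s * s + dl * dl)).
     apply Rmult_le_compat_l. lra. unfold a. replace (1 - (1 - s)) with s by ring. simpl.
     assert (2 * (1 - s) * (1 - cc) <= dl * dl) by nra. lra.
     apply Rle_trans with (e * (2 * s * s)). apply Rmult_le_compat_l. lra. nra.
     apply Rle_trans with (dl * dl / 4). nra.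
     apply Rle_trans with (1 - cc). lra. assert (1 <= (1 + a)^2) by (simpl; nra).
     assert (0 <= 1 - cc) by nra. nra. }
   replace (cos b) with (1 - e) by (unfold e; ring). nra. }
 assert (HX1 : -1 <= X <= 1) by (split; nra).
 exists (acos X). split.
 - pose proof (acos_bound X). rewrite Rabs_pos_eq by lra.
   destruct (Rle_dec (acos X) dl) as [Hle|Hgt]; auto. exfalso.
   assert (cos (acos X) < cos dl) by (apply cos_decreasing_1; lra).
   rewrite cos_acos in H3 by lra. lra.
 - unfold cexpi. rewrite cos_acos by lra. rewrite sin_acos by lra.
   replace (1 - X²) with (Y²) by (unfold Rsqr; simpl in HXY; lra).
   rewrite sqrt_Rsqr by lra. unfold X, Y. destruct (Wm a b); auto.
Qed.

Lemma core n d sigma c (s dl eps : R) (r T : nat) :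
  (1 <= d)%nat -> (d <= n)%nat ->
  (forall j, n15 n <= INR j -> (j <= n)%nat -> Cmod (c j) <= 1) ->
  0 < dl -> dl <= s -> s <= 1 -> 0 <= eps ->
  (forall th, Rabs th <= dl -> Cmod (pval n d sigma c (cexpi th)) <= eps) ->
  (T <= 2 ^ r)%nat ->
  INR T * (2 * PI / INR (2 ^ r)) <= dl / (2 * s) ->
  Cmod (pval n d sigma c (RtoC (1 - s))) ^ (2 ^ r) <= 2 ^ n * (eps ^ T * (INR n + 3) ^ (2 ^ r - T)).
Proof. intros Hd1 Hdn Hc Hdl Hds Hs1 Heps Hsmall HT HTang.
 set (N := (2 ^ r)%nat) in *.
 assert (HN : (1 <= N)%nat) by (unfold N; pose proof (Nat.pow_nonzero 2 r); lia).
 assert (HNr : 0 < INR N) by (apply lt_0_INR; lia).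
 set (a := 1 - s).
 assert (Ha : 0 <= a < 1) by (unfold a; lra).
 set (om := cexpi (2 * PI / INR N)).
 set (G := fun z => cprod (fun k => Pm n d sigma c a (om ^ k * z)%C) N).
 assert (HG : IsPoly G (N * n)) by (apply IsPoly_prod; apply IsPoly_Pm; auto).
 set (M' := (N * (n + 1) - 1)%nat).
 assert (HM : (N * n <= M')%nat) by (unfold M'; nia).
 assert (HSM : S M' = (N * (n + 1))%nat) by (unfold M'; nia).
 destruct (mean_value_max G (N * n) M' HG HM) as [l [Hl Hmax]].
 set (eta := cexpi (2 * PI / INR (S M'))) in *.
 assert (G0 : G (RtoC 0) = (pval n d sigma c (RtoC a) ^ N)%C).
 { unfold G. rewrite <- cprod_const. apply cprod_ext. intros k _.
   rewrite Cmult_0_r. rewrite (Pm_eq n d sigma c a (RtoC 0) (RtoC a)); auto.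
   replace (1 + RtoC a * RtoC 0)%C with (RtoC 1) by ring. rewrite Cpow_1_l. ring.
   ring. }
 rewrite G0, Cmod_pow in Hmax.
 set (R1 := (n + 1)%nat).
 assert (HR1 : R1 <> 0%nat) by (unfold R1; lia).
 set (q := (l / R1)%nat). set (rr := (l mod R1)%nat).
 assert (Hl_eq : l = (R1 * q + rr)%nat) by (apply Nat.div_mod; auto).
 assert (Hrr : (rr < R1)%nat) by (apply Nat.mod_upper_bound; auto).
 set (bet := fun j : nat => INR j * (2 * PI / INR N) + INR rr * (2 * PI / INR (S M'))).
 assert (HR1r : 0 < INR R1) by (apply lt_0_INR; lia).
 assert (HSMr : INR (S M') = INR N * INR R1) by (rewrite HSM, mult_INR; auto).
 assert (Hpt : forall k, (om ^ k * eta ^ l)%C = cexpi (bet (k + q)%nat)).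
 { intros k. unfold om, eta. rewrite !cexpi_pow, cexpi_add. f_equal. unfold bet.
   rewrite Hl_eq, HSMr, !plus_INR, mult_INR. field. lra. }
 assert (HGl : G (eta ^ l)%C = cprod (fun k => (1 + RtoC a * cexpi (bet (k + q)%nat)) ^ n
                                  * pval n d sigma c (Wm a (bet (k + q)%nat)))%C N).
 { unfold G. apply cprod_ext. intros k _. rewrite Hpt. apply Pm_eq; auto. apply Wm_eq; auto. }
 rewrite HGl, cprod_mul, Cmod_mult, cprod_pow, Cmod_pow, (Cmod_cprod (fun k => pval n d sigma c (Wm a (bet (k + q)%nat)))) in Hmax.
 assert (Hden : Cmod (cprod (fun k => 1 + RtoC a * cexpi (bet (k + q)%nat))%C N) <= 2).
 { rewrite (cprod_ext _ (fun k => 1 + (RtoC a * eta ^ l) * om ^ k)%C).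
   2:{ intros k _. rewrite <- Hpt. ring. }
   unfold om, N. rewrite root_prod. fold N.
   eapply Rle_trans. apply Cmod_triangle. rewrite Cmod_1, Cmod_opp, Cmod_pow, Cmod_opp, Cmod_mult.
   unfold eta. rewrite Cmod_pow, Cmod_cexpi, pow1, Rmult_1_r, Cmod_R, Rabs_pos_eq by lra.
   assert (a ^ N <= 1 ^ N) by (apply pow_incr; lra). rewrite pow1 in H. lra. }
 set (F := fun j => Cmod (pval n d sigma c (Wm a (bet j)))).
 assert (HF : forall j, F (j + N)%nat = F j).
 { intros j. unfold F. f_equal. f_equal. rewrite <- (Wm_period a (bet j)). f_equal.
   unfold bet. rewrite plus_INR, HSMr. field; repeat split; lra. }
 change (rprod (fun k => Cmod (pval n d sigma c (Wm a (bet (k + q)%nat)))) N) with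
        (rprod (fun k => F (k + q)%nat) N) in Hmax.
 rewrite (rprod_shift F N q HF) in Hmax.
 assert (Hb : rprod F N <= eps ^ T * (INR n + 3) ^ (N - T)).
 { apply rprod_bound; auto.
   - intros j. split. apply Cmod_ge_0. apply pval_upper; auto. apply Cmod_Wm; auto.
   - intros j Hj. unfold F.
     assert (Hbj : 0 <= bet j <= dl / (2 * s)).
     { unfold bet. assert (0 <= INR j) by apply pos_INR. assert (0 <= INR rr) by apply pos_INR.
       pose proof PI_RGT_0.
       assert (0 < 2 * PI / INR N) by (apply Rdiv_lt_0_compat; lra).
       assert (0 < 2 * PI / INR (S M')) by (apply Rdiv_lt_0_compat; [lra | apply lt_0_INR; lia]).
       split. apply Rplus_le_le_0_compat; apply Rmult_le_pos; lra.
       assert (INR rr <= INR R1) by (apply le_INR; lia).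
       assert (INR rr * (2 * PI / INR (S M')) <= 2 * PI / INR N).
       { rewrite HSMr. apply Rle_trans with (INR R1 * (2 * PI / (INR N * INR R1))).
         apply Rmult_le_compat_r; [rewrite <- HSMr; lra | lra]. right. field; split; lra. }
       assert (INR (S j) <= INR T) by (apply le_INR; lia). rewrite S_INR in H6.
       apply Rle_trans with (INR T * (2 * PI / INR N)); auto. nra. }
     destruct (Wm_arc s dl (bet j)) as [th [Hth Hw]]; auto.
     fold a in Hw. rewrite Hw. apply Hsmall; auto. }
 assert (0 <= Cmod (cprod (fun k => 1 + RtoC a * cexpi (bet (k + q)%nat))%C N)) by apply Cmod_ge_0.
 assert (Cmod (cprod (fun k => 1 + RtoC a * cexpi (bet (k + q)%nat))%C N) ^ n <= 2 ^ n) by (apply pow_incr; lra).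
 eapply Rle_trans. apply Hmax. apply Rmult_le_compat; auto. apply pow_le; auto.
 apply rprod_nonneg. intros; apply Cmod_ge_0. Qed.

Lemma ln_le' x y : 0 < x -> x <= y -> ln x <= ln y.
Proof. intros Hx [H|H]. left; apply ln_increasing; auto. subst; lra. Qed.

Lemma exp_pow' x j : exp x ^ j = exp (INR j * x).
Proof. induction j. simpl. rewrite Rmult_0_l, exp_0. auto.
 simpl pow. rewrite IHj, <- exp_plus, S_INR. f_equal. ring. Qed.

Lemma final_num (K m0 L s dl Q N T nr lam l2 lB l2s : R) :
  K = 10000 -> 1 <= m0 -> 1/2 <= L -> 0 < T -> 0 < dl -> 0 < s ->
  T * (K * m0 * L ^ 5) <= nr * l2 + N * (lB + l2s) ->
  0 <= nr <= N -> 0 <= l2 <= L -> 0 <= lB <= 3 * L -> 0 <= l2s <= 2 * L ->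
  N <= 2 * T * Q -> Q <= 4 * PI * s / dl + 1 -> s / dl <= lam * m0 -> lam <= 5 * L -> False.
Proof. intros HK Hm HL HT Hdl Hs H1 Hn Hl2 HlB Hl2s HN HQ Hsd Hlam.
 pose proof PI_4. pose proof PI_RGT_0.
 assert (A1 : nr * l2 + N * (lB + l2s) <= N * (6 * L)) by nra.
 assert (A2 : 4 * PI * s / dl <= 4 * PI * (lam * m0)).
 { replace (4 * PI * s / dl) with (4 * PI * (s / dl)) by (field; lra). nra. }
 assert (A3a : lam * m0 <= 5 * L * m0) by nra.
 assert (A3b : 4 * PI * (lam * m0) <= 4 * PI * (5 * L * m0)) by (apply Rmult_le_compat_l; lra).
 assert (A3 : Q <= 20 * PI * L * m0 + 1) by lra.
 assert (A4 : 1 <= 2 * L * m0) by nra.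
 assert (A5 : Q <= (20 * PI + 2) * L * m0) by nra.
 assert (A6 : 0 <= Q) by (assert (0 <= 4 * PI * s / dl) by (apply Rmult_le_pos; [nra| left; apply Rinv_0_lt_compat; lra]); nra).
 assert (A7 : T * (K * m0 * L ^ 5) <= 2 * T * Q * (6 * L)) by nra.
 assert (A8 : K * m0 * L ^ 5 <= 12 * Q * L).
 { apply Rmult_le_reg_l with T; auto. nra. }
 assert (A9 : K * m0 * L ^ 5 <= 12 * (20 * PI + 2) * L * m0 * L) by nra.
 assert (A10 : L ^ 5 = L ^ 2 * L ^ 3) by ring.
 assert (A11 : 1/8 <= L ^ 3). { assert (1/4 <= L^2) by nra. simpl. nra. }
 assert (A12 : 0 < m0 * L ^ 2) by (simpl; nra).
 assert (A13 : K * (m0 * L ^ 2) / 8 <= K * m0 * L ^ 5) by (rewrite A10; nra).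
 assert (A14 : K * (m0 * L ^ 2) / 8 <= 12 * (20 * PI + 2) * (m0 * L ^ 2)) by (simpl in *; nra).
 nra. Qed.

Theorem theorem3 :
  exists K : R, 0 < K /\
  forall (n d : nat) (sigma : bool) (c : nat -> C),
    (2 <= n)%nat ->
    (1 <= d)%nat -> INR d < n15 n ->
    (forall j : nat, n15 n <= INR j -> (j <= n)%nat -> Cmod (c j) <= 1) ->
    exists theta : R,
      Rabs theta <= Rpower (INR n) (- (2/5)) /\
      exp (- K * n15 n * (ln (INR n)) ^ 5) <= Cmod (pval n d sigma c (cexpi theta)).
Proof.
 exists 10000. split. lra.
 intros n d sigma c Hn Hd1 Hdm Hc.
 set (m0 := n15 n) in *. set (dl := Rpower (INR n) (- (2/5))).
 set (L := ln (INR n)). set (K := 10000).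
 set (eps := exp (- K * m0 * L ^ 5)).
 destruct (Classical_Prop.classic (exists theta, Rabs theta <= dl /\ eps <= Cmod (pval n d sigma c (cexpi theta)))) as [H|Hno]; auto.
 exfalso.
 assert (Hsmall : forall th, Rabs th <= dl -> Cmod (pval n d sigma c (cexpi th)) <= eps).
 { intros th Hth. destruct (Rle_dec eps (Cmod (pval n d sigma c (cexpi th)))) as [h|h].
   exfalso; apply Hno; eauto. lra. }
 assert (Hnr : 2 <= INR n) by (replace 2 with (INR 2) by (simpl; ring); apply le_INR; lia).
 assert (HL : 1/2 <= L). { unfold L. pose proof ln_lt_2. assert (ln 2 <= ln (INR n)) by (apply ln_le'; lra). lra. }
 assert (Hd1r : 1 <= INR d) by (replace 1 with (INR 1) by (simpl; ring); apply le_INR; lia).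
 assert (Hm1 : 1 < m0) by lra.
 assert (Hmn : m0 <= INR n).
 { unfold m0, n15. rewrite <- (Rpower_1 (INR n)) at 2 by lra. apply Rle_Rpower; lra. }
 assert (Hdl : dl = / (m0 ^ 2)).
 { unfold dl, m0, n15. rewrite Rpower_Ropp. f_equal. rewrite <- Rpower_pow.
   rewrite Rpower_mult. f_equal. simpl. field. unfold Rpower. apply exp_pos. }
 assert (Hdlpos : 0 < dl) by (rewrite Hdl; apply Rinv_0_lt_compat; nra).
 assert (Hdl1 : dl * m0 ^ 2 = 1) by (rewrite Hdl; field; nra).
 assert (Hdn : (d <= n)%nat) by (apply INR_le; lra).
 set (lam := ln (4 * INR n ^ 3)).
 assert (Hlam1 : 1 <= lam).
 { unfold lam. rewrite <- (ln_exp 1). apply ln_le'. apply exp_pos. pose proof exp_le_3. simpl. nra. }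
 assert (Hlam5 : lam <= 5 * L).
 { unfold lam, L. replace (5 * ln (INR n)) with (INR 5 * ln (INR n)) by (simpl; ring). rewrite <- ln_pow by lra. apply ln_le'. simpl; nra. assert (4 <= INR n ^ 2) by nra. assert (0 <= INR n ^ 3) by (apply pow_le; lra). replace (INR n ^ 5) with (INR n ^ 2 * INR n ^ 3) by ring. nra. }
 set (s := if Rle_dec lam m0 then lam / m0 else 1).
 assert (Hs : 0 < s <= 1 /\ s <= lam / m0 /\ 1 / INR n <= s /\ dl <= s /\ s / 2 <= Cmod (pval n d sigma c (RtoC (1 - s)))).
 { unfold s. destruct (Rle_dec lam m0) as [h|h].
   - assert (0 < lam / m0) by (apply Rdiv_lt_0_compat; lra).
     assert (lam / m0 <= 1) by (apply Rmult_le_reg_r with m0; [lra|]; field_simplify; lra).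
     assert (1 / INR n <= lam / m0).
     { apply Rle_trans with (1 / m0). apply Rmult_le_compat_l. lra. apply Rinv_le_contravar; lra.
       apply Rmult_le_compat_r. left; apply Rinv_0_lt_compat; lra. lra. }
     assert (dl <= lam / m0).
     { assert (dl * m0 <= 1) by (simpl in Hdl1; nra).
       apply Rle_trans with (1 / m0). apply Rmult_le_reg_r with m0. lra.
       replace (1 / m0 * m0) with 1 by (field; lra). auto.
       apply Rmult_le_compat_r. left; apply Rinv_0_lt_compat; lra. lra. }
     split; [lra|]. split; [lra|]. split; [lra|]. split; [lra|].
     set (ss := lam / m0) in *.
     assert (Hlow := pval_lower n d sigma c (1 - ss) (exp (- lam))).
     assert (He : exp (- lam) = / (4 * INR n ^ 3)).
     { unfold lam. rewrite exp_Ropp, exp_ln. auto. simpl; nra. }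
     assert (Hb : (1 - (1 - ss)) - (INR n + 1) * exp (- lam) <= Cmod (pval n d sigma c (RtoC (1 - ss)))).
     { apply Hlow; auto. lra. left; apply exp_pos.
       intros j Hj. apply Rle_trans with (exp (- ss) ^ j). apply pow_incr. split. lra.
       pose proof (exp_ineq1_le (- ss)). lra.
       rewrite exp_pow'. 
       assert (INR j * - ss <= - lam).
       { replace (- lam) with (m0 * - ss) by (unfold ss; field; lra). change (m0 <= INR j) in Hj. nra. }
       destruct H3 as [h3|h3]. left; apply exp_increasing; auto. rewrite h3; lra. }
     rewrite He in Hb.
     assert ((INR n + 1) * / (4 * INR n ^ 3) <= ss / 2).
     { apply Rle_trans with (1 / (2 * INR n)).
       apply Rmult_le_reg_r with (4 * INR n ^ 3). simpl; nra.
       replace ((INR n + 1) * / (4 * INR n ^ 3) * (4 * INR n ^ 3)) with (INR n + 1) by (field; lra).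
       replace (1 / (2 * INR n) * (4 * INR n ^ 3)) with (2 * INR n ^ 2) by (field; lra). simpl; nra.
       replace (1 / (2 * INR n)) with ((1 / INR n) / 2) by (field; lra). lra. }
     lra.
   - assert (1 < lam / m0) by (apply Rmult_lt_reg_r with m0; [lra|]; field_simplify; lra).
     assert (1 / INR n <= 1) by (apply Rmult_le_reg_r with (INR n); [lra|]; field_simplify; lra).
     assert (dl <= 1) by (simpl in Hdl1; nra).
     split; [lra|]. split; [lra|]. split; [lra|]. split; [lra|].
     assert (Hb := pval_lower n d sigma c (1 - 1) 0).
     assert (1 - (1 - 1) - (INR n + 1) * 0 <= Cmod (pval n d sigma c (RtoC (1 - 1)))).
     { apply Hb; auto. lra. lra. intros j Hj. change (m0 <= INR j) in Hj.
       destruct j. simpl in Hj. lra. rewrite Rminus_diag, pow_i. lra. lia. }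
     lra. }
 destruct Hs as [[Hs0 Hs1] [Hslam [Hsn [Hdls Hplow]]]].
 set (psi := dl / (2 * s)).
 assert (Hpsi : 0 < psi) by (unfold psi; apply Rdiv_lt_0_compat; lra).
 pose proof PI_RGT_0 as HPI.
 set (x := 2 * PI / psi).
 assert (Hx : 0 < x) by (unfold x; apply Rdiv_lt_0_compat; lra).
 destruct (archimed x) as [Hup1 Hup2].
 set (zQ := up x) in *.
 assert (HzQ : (0 <= zQ)%Z) by (apply le_IZR; simpl; lra).
 set (Q := Z.to_nat zQ).
 assert (HQr : INR Q = IZR zQ) by (unfold Q; rewrite INR_IZR_INZ, Z2Nat.id; auto).
 assert (HzQ1 : (1 <= zQ)%Z) by (assert (0 < zQ)%Z by (apply lt_IZR; simpl; lra); lia).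
 assert (HQ1 : (1 <= Q)%nat) by (apply INR_le; rewrite HQr; simpl; apply IZR_le in HzQ1; simpl in HzQ1; lra).
 set (r := (n + 2 * Q)%nat).
 set (N := (2 ^ r)%nat).
 assert (HrN : (r < N)%nat) by (apply Nat.pow_gt_lin_r; lia).
 set (T := (N / Q)%nat).
 assert (HTQ : (Q * T <= N)%nat) by (apply Nat.Div0.mul_div_le).
 assert (HNT : (N < Q * (T + 1))%nat).
 { pose proof (Nat.div_mod N Q ltac:(lia)). pose proof (Nat.mod_upper_bound N Q ltac:(lia)). fold T in H. lia. }
 assert (HT1 : (1 <= T)%nat) by nia.
 assert (HTN : (T <= N)%nat) by nia.
 assert (HTr : 1 <= INR T) by (replace 1 with (INR 1) by reflexivity; apply le_INR; lia).
 assert (HNr : 0 < INR N) by (apply lt_0_INR; lia).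
 assert (HTQr : INR T * INR Q <= INR N) by (rewrite <- mult_INR; apply le_INR; lia).
 assert (HQx : x <= INR Q) by lra.
 assert (Hang : INR T * (2 * PI / INR N) <= dl / (2 * s)).
 { fold psi. apply Rmult_le_reg_r with (INR N). lra.
   replace (INR T * (2 * PI / INR N) * INR N) with (INR T * (2 * PI)) by (field; lra).
   assert (2 * PI <= psi * INR Q).
   { replace (2 * PI) with (x * psi) by (unfold x; field; lra). nra. }
   nra. }
 assert (Heps : 0 <= eps) by (left; apply exp_pos).
 pose proof (core n d sigma c s dl eps r T Hd1 Hdn Hc Hdlpos Hdls Hs1 Heps Hsmall HTN Hang) as Hcore.
 fold N in Hcore.
 set (B := INR n + 3) in *.
 assert (HB1 : 1 <= B) by (unfold B; lra).
 assert (Hlow : (s / 2) ^ N <= 2 ^ n * (eps ^ T * B ^ (N - T))).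
 { eapply Rle_trans; [|apply Hcore]. apply pow_incr. lra. }
 assert (Hpos1 : 0 < (s / 2) ^ N) by (apply pow_lt; lra).
 assert (Hln := ln_le' _ _ Hpos1 Hlow).
 assert (P1 : 0 < 2 ^ n) by (apply pow_lt; lra).
 assert (P2 : 0 < eps ^ T) by (apply pow_lt; apply exp_pos).
 assert (P3 : 0 < B ^ (N - T)) by (apply pow_lt; lra).
 rewrite ln_mult, ln_mult, !ln_pow in Hln by (try apply Rmult_lt_0_compat; auto; try lra; apply exp_pos).
 unfold eps in Hln. rewrite ln_exp in Hln.
 assert (HlnB : 0 <= ln B) by (rewrite <- ln_1; apply ln_le'; lra).
 assert (HNT' : INR (N - T) <= INR N) by (apply le_INR; lia).
 assert (Hkey : INR T * (K * m0 * L ^ 5) <= INR n * ln 2 + INR N * (ln B + - ln (s / 2))).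
 { assert (INR (N - T) * ln B <= INR N * ln B) by (apply Rmult_le_compat_r; auto).
   nra. }
 apply (final_num K m0 L s dl (INR Q) (INR N) (INR T) (INR n) lam (ln 2) (ln B) (- ln (s / 2))); auto; try lra.
 - split. apply pos_INR. apply le_INR. lia.
 - pose proof ln_lt_2. assert (ln 2 <= L) by (apply ln_le'; lra). lra.
 - split. auto. unfold L. replace (3 * ln (INR n)) with (INR 3 * ln (INR n)) by (simpl; ring).
   rewrite <- ln_pow by lra. apply ln_le'. unfold B; lra. unfold B. assert (4 <= INR n * INR n) by nra. simpl; nra.
 - assert (ln (s / 2) <= ln 1) by (apply ln_le'; lra). rewrite ln_1 in H. split. lra.
   rewrite <- ln_Rinv by lra. unfold L. replace (2 * ln (INR n)) with (INR 2 * ln (INR n)) by (simpl; ring).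
   rewrite <- ln_pow by lra. apply ln_le'. apply Rinv_0_lt_compat; lra.
   replace (/ (s / 2)) with (2 / s) by (field; lra).
   apply Rmult_le_reg_r with s. lra. replace (2 / s * s) with 2 by (field; lra).
   assert (1 <= INR n * s) by (apply Rmult_le_reg_l with (/ INR n); [apply Rinv_0_lt_compat; lra|];
     rewrite <- Rmult_assoc, Rinv_l, Rmult_1_l by lra; unfold Rdiv in Hsn; lra).
   simpl. nra.
 - assert (INR N < INR Q * (INR T + 1)) by (rewrite <- S_INR, <- mult_INR; apply lt_INR; lia).
   nra.
 - replace (4 * PI * s / dl) with x by (unfold x, psi; field; lra). lra.
 - rewrite Hdl. replace (s / / m0 ^ 2) with (s * m0 ^ 2) by (field; lra).
   apply Rle_trans with (lam / m0 * m0 ^ 2). apply Rmult_le_compat_r. simpl; nra. auto.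
   right. field. lra.
Qed.
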